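(* Let $(X,d)$ be a compact metric space and $(X,f)$ a flow or semiflow that has the weak reparametrized gluing orbit property and is not minimal. Then there exist $z\in X$, $\epsilon>0$ and $\tau>0$ such that $d(f^t(z),z)\ge\epsilon$ for every $t\ge\tau$.
   Context: A flow (resp. semiflow) on $X$ is a continuous family $\{f^t\}$ of continuous maps $X\to X$ indexed by $t\in\mathbb{R}$ (resp. $t\in[0,\infty)$) with $f^0=\mathrm{id}$ and $f^{t+s}=f^t\circ f^s$. $(X,f)$ is minimal if for every $x\in X$ the forward orbit $\{f^t(x):t\ge 0\}$ is dense in $X$. For $L\ge 1$, an $L$-reparametrization is a strictly increasing continuous function $\gamma:[0,\infty)\to[0,\infty)$ with $\gamma(0)=0$ and $L^{-1}\le \frac{\gamma(t_1)-\gamma(t_2)}{t_1-t_2}\le L$ for all $t_1\ne t_2$ in $[0,\infty)$. An orbit sequence of rank $k$ is a finite sequence $\mathscr{C}=\{(x_j,m_j)\in X\times[0,\infty):j=1,\dots,k\}$. A gap for it is a $(k-1)$-tuple $\mathscr{g}=\{t_j\in[0,\infty):j=1,\dots,k-1\}$. Given a reparametrization $\gamma$ and $\epsilon>0$, $(\mathscr{C},\mathscr{g},\gamma)$ is $\epsilon$-shadowed by $z\in X$ if for every $j=1,\dots,k$ and every $t\in[0,m_j]$ one has $d(f^{\gamma(s_j+t)}(z),f^t(x_j))<\epsilon$, where $s_1=0$ and $s_j=\sum_{i=1}^{j-1}(m_i+t_i)$ for $j\ge2$. $(X,f)$ has the weak reparametrized gluing orbit property if for every $\epsilon>0$ there is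 $M=M(\epsilon)>0$ such that for every orbit sequence $\mathscr{C}$ there exist a gap $\mathscr{g}$ with $\max\mathscr{g}\le M$ and an $M$-reparametrization $\gamma$ such that $(\mathscr{C},\mathscr{g},\gamma)$ is $\epsilon$-shadowed by some point of $X$. *)

(* Defs.v *)
From Stdlib Require Import Reals Lra List.
Open Scope R_scope.

Definition is_metric {X : Type} (d : X -> X -> R) : Prop :=
  (forall x y, 0 <= d x y) /\
  (forall x y, d x y = 0 <-> x = y) /\
  (forall x y, d x y = d y x) /\
  (forall x y z, d x z <= d x y + d y z).

Definition open_set {X : Type} (d : X -> X -> R) (U : X -> Prop) : Prop :=
  forall x, U x -> exists r, 0 < r /\ forall y, d x y < r -> U y.

Definition compact_space {X : Type} (d : X -> X -> R) : Prop :=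
  forall (I : Type) (U : I -> X -> Prop),
    (forall i, open_set d (U i)) ->
    (forall x, exists i, U i x) ->
    exists l : list I, forall x, exists i, In i l /\ U i x.

(* f : R -> X -> X is a semiflow: only times t >= 0 are used.
   Joint continuity on [0,oo) x X, f^0 = id, f^(t+s) = f^t o f^s. *)
Definition is_semiflow {X : Type} (d : X -> X -> R) (f : R -> X -> X) : Prop :=
  (forall x, f 0 x = x) /\
  (forall t s x, 0 <= t -> 0 <= s -> f (t + s) x = f t (f s x)) /\
  (forall t x eps, 0 <= t -> 0 < eps ->
     exists delta, 0 < delta /\
       forall s y, 0 <= s -> Rabs (s - t) < delta -> d x y < delta ->
         d (f s y) (f t x) < eps).

Definition is_flow {X : Type} (d : X -> X -> R) (f : R -> X -> X) : Prop :=
  (forall x, f 0 x = x) /\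
  (forall t s x, f (t + s) x = f t (f s x)) /\
  (forall t x eps, 0 < eps ->
     exists delta, 0 < delta /\
       forall s y, Rabs (s - t) < delta -> d x y < delta ->
         d (f s y) (f t x) < eps).

Definition minimal {X : Type} (d : X -> X -> R) (f : R -> X -> X) : Prop :=
  forall x y eps, 0 < eps -> exists t, 0 <= t /\ d (f t x) y < eps.

Definition reparametrization (L : R) (gamma : R -> R) : Prop :=
  1 <= L /\
  gamma 0 = 0 /\
  (forall t, 0 <= t -> 0 <= gamma t) /\
  (forall t1 t2, 0 <= t1 -> t1 < t2 -> gamma t1 < gamma t2) /\
  (forall t0 eps, 0 <= t0 -> 0 < eps -> exists delta, 0 < delta /\
      forall t, 0 <= t -> Rabs (t - t0) < delta -> Rabs (gamma t - gamma t0) < eps) /\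
  (forall t1 t2, 0 <= t1 -> 0 <= t2 -> t1 <> t2 ->
     / L <= (gamma t1 - gamma t2) / (t1 - t2) <= L).

Fixpoint start_time (m g : nat -> R) (j : nat) : R :=
  match j with
  | O => 0
  | S j' => start_time m g j' + (m j' + g j')
  end.

(* orbit sequence {(x j, m j) : j < k}, gap {g j : j < k-1} *)
Definition shadowed {X : Type} (d : X -> X -> R) (f : R -> X -> X)
  (k : nat) (x : nat -> X) (m g : nat -> R) (gamma : R -> R) (eps : R) (z : X) : Prop :=
  forall j, (j < k)%nat -> forall t, 0 <= t <= m j ->
    d (f (gamma (start_time m g j + t)) z) (f t (x j)) < eps.

Definition weak_reparam_gluing {X : Type} (d : X -> X -> R) (f : R -> X -> X) : Prop :=
  forall eps, 0 < eps -> exists M, 0 < M /\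
    forall (k : nat) (x : nat -> X) (m : nat -> R),
      (forall j, (j < k)%nat -> 0 <= m j) ->
      exists (g : nat -> R) (gamma : R -> R) (z : X),
        (forall j, (S j < k)%nat -> 0 <= g j <= M) /\
        reparametrization M gamma /\
        shadowed d f k x m g gamma eps z.

(* Main.v *)
Require Import Defs.
From Stdlib Require Import Reals Lra Lia ZArith List Classical.
Open Scope R_scope.

Lemma nat_above (t : R) : exists n : nat, t <= INR n.
Proof.
  destruct (archimed t) as [H1 _].
  destruct (Z_le_gt_dec 0 (up t)) as [Hz|Hz].
  - exists (Z.to_nat (up t)). rewrite INR_IZR_INZ, Z2Nat.id by lia. lra.
  - exists 0%nat. simpl. assert (IZR (up t) < 0) by (apply IZR_lt; lia). lra.
Qed.

Lemma Rmax0_lip x a : Rabs (Rmax 0 x - Rmax 0 a) <= Rabs (x - a).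
Proof.
  unfold Rmax; destruct (Rle_dec 0 x); destruct (Rle_dec 0 a);
  unfold Rabs; repeat destruct Rcase_abs; lra.
Qed.

Definition maxN {A : Type} (h : A -> nat) (l : list A) : nat :=
  fold_right (fun i acc => Nat.max (h i) acc) 0%nat l.

Lemma maxN_in {A : Type} (h : A -> nat) l i : In i l -> (h i <= maxN h l)%nat.
Proof.
  induction l as [|a l IH]; simpl; [tauto|].
  intros [<-|Hi]; [lia|]. specialize (IH Hi). lia.
Qed.

Lemma cluster (X : Type) (d : X -> X -> R) (P : nat -> X -> Prop) :
  is_metric d -> compact_space d -> (forall n, exists w, P n w) ->
  exists z, forall delta N, 0 < delta -> exists n w, (N <= n)%nat /\ P n w /\ d w z < delta.
Proof.
  intros [Hd0 [Hd1 [Hds Hdt]]] Hc Hex.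
  apply NNPP; intro Hno.
  assert (Hall : forall p, exists delta N, 0 < delta /\
            forall n w, (N <= n)%nat -> P n w -> delta <= d w p).
  { intro p. apply NNPP; intro H1. apply Hno. exists p. intros delta N Hdel.
    apply NNPP; intro H2. apply H1. exists delta, N. split; [exact Hdel|].
    intros n w Hn Hw. apply Rnot_lt_le. intro Hlt. apply H2. exists n, w. auto. }
  set (U := fun (i : X * R * nat) (y : X) =>
        let '(p, delta, N) := i in
        0 < delta /\ (forall n w, (N <= n)%nat -> P n w -> delta <= d w p) /\ d p y < delta).
  destruct (Hc (X * R * nat)%type U) as [l Hl].
  - intros [[p delta] N] y [Hdel [Hp Hy]].
    exists (delta - d p y). split; [lra|]. intros y' Hy'.
    split; [exact Hdel|]. split; [exact Hp|]. specialize (Hdt p y y'). lra.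
  - intro x. destruct (Hall x) as [delta [N [Hdel Hp]]].
    exists (x, delta, N). simpl. split; [exact Hdel|]. split; [exact Hp|].
    assert (d x x = 0) by (apply Hd1; reflexivity). lra.
  - set (Nm := maxN (fun i : X * R * nat => snd i) l).
    destruct (Hex Nm) as [w Hw].
    destruct (Hl w) as [[[p delta] N] [Hin [Hdel [Hp Hy]]]].
    pose proof (maxN_in (fun i : X * R * nat => snd i) l _ Hin) as HN. simpl in HN.
    specialize (Hp Nm w HN Hw). rewrite Hds in Hp. lra.
Qed.

Lemma ratio_le (a b L : R) : 0 < a -> b / a <= L -> b <= L * a.
Proof.
  intros Ha H. replace b with ((b / a) * a) by (field; lra).
  apply Rmult_le_compat_r; lra.
Qed.

Lemma ratio_ge (a b L : R) : 0 < a -> L <= b / a -> L * a <= b.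
Proof.
  intros Ha H. replace b with ((b / a) * a) by (field; lra).
  apply Rmult_le_compat_r; lra.
Qed.

Lemma build (X : Type) (d : X -> X -> R) (f : R -> X -> X) (x y : X) (e : R) :
  is_metric d -> (forall x, f 0 x = x) -> weak_reparam_gluing d f -> 0 < e ->
  (forall t, 0 <= t -> e <= d (f t x) y) ->
  exists A, 0 < A /\ forall n : nat, exists w, forall s, A <= s <= INR n -> e / 2 <= d (f s w) w.
Proof.
  intros [Hd0 [Hd1 [Hds Hdt]]] Hf0 Hglue He Hxy.
  destruct (Hglue (e / 4)) as [M [HM Hgl]]; [lra|].
  exists (M * M + 1). split; [nra|]. intro n.
  set (m := M * (INR n + 1)).
  assert (Hm : 0 < m) by (unfold m; pose proof (pos_INR n); nra).
  set (xs := fun j : nat => match j with 0%nat => y | _ => x end).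
  set (ms := fun j : nat => match j with 0%nat => 0 | _ => m end).
  destruct (Hgl 2%nat xs ms) as [g [gamma [z [Hg [Hrep Hsh]]]]].
  { intros j _. destruct j; simpl; lra. }
  exists z. intros s Hs.
  destruct Hrep as [HM1 [Hg0 [Hgpos [Hmono [Hcont Hlip]]]]].
  destruct (Hg 0%nat) as [Hg0a Hg0b]; [lia|].
  set (g0 := g 0%nat) in *.
  assert (Hlow : gamma g0 <= M * M).
  { destruct (Req_dec g0 0) as [E|E].
    - rewrite E, Hg0. nra.
    - assert (Hr := proj2 (Hlip g0 0 Hg0a (Rle_refl 0) E)).
      rewrite Hg0, !Rminus_0_r in Hr. apply ratio_le in Hr; [|lra]. nra. }
  assert (Hhigh : INR n + 1 <= gamma (g0 + m)).
  { assert (Hr := proj1 (Hlip (g0 + m) 0 ltac:(lra) (Rle_refl 0) ltac:(lra))).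
    rewrite Hg0, !Rminus_0_r in Hr. apply ratio_ge in Hr; [|lra].
    unfold m in *. assert (/ M * (g0 + M * (INR n + 1)) = / M * g0 + (INR n + 1))
      by (field; lra).
    assert (0 <= / M * g0) by (apply Rmult_le_pos; [left; apply Rinv_0_lt_compat; lra| lra]).
    lra. }
  set (h := fun t => gamma (Rmax 0 t) - s).
  assert (Hhc : continuity h).
  { intro a. unfold h. apply continuity_pt_minus; [|apply continuity_pt_const; intros ? ?; reflexivity].
    intros eps Heps.
    destruct (Hcont (Rmax 0 a) eps (Rmax_l 0 a) Heps) as [del [Hdel Hd]].
    exists del. split; [exact Hdel|]. intros t [_ Ht].
    unfold R_dist in *. simpl. unfold R_dist.
    apply Hd; [apply Rmax_l|]. pose proof (Rmax0_lip t a). simpl in Ht. unfold R_dist in Ht. lra. }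
  destruct (IVT h g0 (g0 + m) Hhc ltac:(lra)) as [t [Ht Hht]].
  { unfold h. rewrite Rmax_right by lra. lra. }
  { unfold h. rewrite Rmax_right by lra. lra. }
  unfold h in Hht. rewrite Rmax_right in Hht by lra.
  assert (Hgt : gamma t = s) by lra.
  assert (H0 := Hsh 0%nat ltac:(lia) 0 ltac:(simpl; lra)).
  simpl in H0. replace (0 + 0) with 0 in H0 by ring. rewrite Hg0, !Hf0 in H0.
  assert (H1 := Hsh 1%nat ltac:(lia) (t - g0) ltac:(simpl; lra)).
  simpl in H1. fold g0 in H1. replace (0 + (0 + g0) + (t - g0)) with t in H1 by ring.
  rewrite Hgt in H1.
  assert (H2 := Hxy (t - g0) ltac:(lra)).
  pose proof (Hdt (f (t - g0) x) (f s z) y).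
  pose proof (Hdt (f s z) z y).
  rewrite (Hds (f (t - g0) x) (f s z)) in *.
  lra.
Qed.

Theorem lemma3p1 (X : Type) (d : X -> X -> R) (f : R -> X -> X) :
  is_metric d -> compact_space d ->
  (is_flow d f \/ is_semiflow d f) ->
  weak_reparam_gluing d f ->
  ~ minimal d f ->
  exists (z : X) (eps tau : R), 0 < eps /\ 0 < tau /\
    forall t, tau <= t -> eps <= d (f t z) z.
Proof.
  intros Hmet Hc Hfl Hgl Hnm.
  assert (Hf0 : forall x, f 0 x = x) by (destruct Hfl as [[H _]|[H _]]; exact H).
  assert (Hfc : forall t x eps, 0 <= t -> 0 < eps -> exists delta, 0 < delta /\
             forall y, d x y < delta -> d (f t y) (f t x) < eps).
  { intros t x eps Ht He. destruct Hfl as [[_ [_ H]]|[_ [_ H]]].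
    - destruct (H t x eps He) as [del [Hdel Hd]]. exists del. split; [exact Hdel|].
      intros y Hy. apply Hd; [|exact Hy]. rewrite Rminus_diag, Rabs_R0. exact Hdel.
    - destruct (H t x eps Ht He) as [del [Hdel Hd]]. exists del. split; [exact Hdel|].
      intros y Hy. apply Hd; [exact Ht| |exact Hy]. rewrite Rminus_diag, Rabs_R0. exact Hdel. }
  assert (Hex : exists x y e, 0 < e /\ forall t, 0 <= t -> e <= d (f t x) y).
  { apply NNPP; intro H. apply Hnm. intros x y e He. apply NNPP; intro H2.
    apply H. exists x, y, e. split; [exact He|]. intros t Ht.
    apply Rnot_lt_le. intro Hlt. apply H2. exists t. auto. }
  destruct Hex as [x [y [e [He Hxy]]]].
  destruct (build X d f x y e Hmet Hf0 Hgl He Hxy) as [A [HA Hb]].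
  destruct (cluster X d (fun n w => forall s, A <= s <= INR n -> e / 2 <= d (f s w) w)
              Hmet Hc Hb) as [z Hz].
  exists z, (e / 4), A. split; [lra|]. split; [exact HA|].
  intros t Ht. apply Rnot_lt_le. intro Hlt.
  destruct Hmet as [Hd0 [Hd1 [Hds Hdt]]].
  destruct (Hfc t z (e / 8) ltac:(lra) ltac:(lra)) as [del [Hdel Hd]].
  destruct (nat_above t) as [N HN].
  destruct (Hz (Rmin del (e / 8)) N) as [n [w [Hn [Hw Hwz]]]].
  { apply Rmin_pos; lra. }
  assert (Hmin1 := Rmin_l del (e / 8)). assert (Hmin2 := Rmin_r del (e / 8)).
  assert (Hnn : INR N <= INR n) by (apply le_INR; exact Hn).
  specialize (Hw t ltac:(lra)).
  assert (H1 : d (f t w) (f t z) < e / 8) by (apply Hd; rewrite Hds; lra).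
  pose proof (Hdt (f t w) (f t z) w). 
  pose proof (Hdt (f t z) z w). rewrite (Hds z w) in *. lra.
Qed.
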